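(* For every list (any length, any initial order) and every request sequence $\sigma$, in the full cost model, $$\min\{\mathrm{TS}(\sigma),\mathrm{MTFO}(\sigma),\mathrm{MTFE}(\sigma)\}\le \tfrac{5}{3}\,\mathrm{OPT}(\sigma).$$ Consequently, a deterministic online algorithm that receives two advice bits indicating which of TS, MTFO, MTFE has the smallest cost on $\sigma$ and then runs it has cost at most $\frac53\mathrm{OPT}(\sigma)$ on every $\sigma$.
   Context: Static list update problem: a list of $l$ distinct items in some initial order; a request sequence $\sigma$ is served in order. Serving a request to the item at position $i$ (positions $1,\dots,l$ from the front) costs $i$ (full cost model). Immediately after an access, the accessed item may be moved closer to the front at no cost (free exchange); at any time two adjacent items may be swapped at cost $1$ (paid exchange). $A(\sigma)$ is the total cost of algorithm $A$ on $\sigma$; $\mathrm{OPT}(\sigma)$ is the minimum cost of any offline algorithm on $\sigma$; all algorithms start from the same initial list. MTFO (Move-To-Front-Odd) moves a requested item to the front (by a free exchange) on the 1st, 3rd, 5th, ... request to that item, and otherwise leaves it in place. MTFE (Move-To-Front-Even) moves a requested item to the front on the 2nd, 4th, 6th, ... request to that item, and otherwise leaves it in place. TS (Timestamp): on a request to item $x$, if $x$ has been requested before and some item preceding $x$ in the list has been requested at most once since the previous request to $x$, then $x$ is moved (free exchange) to immediately in front of the frontmost such item; otherwise no item is moved. None of these algorithms makes paid exchanges. *)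

(* Defs.v *)
From mathcomp Require Import all_boot.
Set Implicit Arguments. Unset Strict Implicit. Unset Printing Implicit Defensive.

Section ListUpdate.
Variable T : eqType.

(* Positions are 1-based: item x in list s is at position (index x s).+1. *)
Definition pos (x : T) (s : seq T) : nat := (index x s).+1.

(* paid exchange: swap the items at 0-based positions i and i+1
   (no-op if out of range; it is still charged 1, which never helps). *)
Definition swap_adj (i : nat) (s : seq T) : seq T :=
  take i s ++ (match drop i s with a :: b :: r => b :: a :: r | r => r end).

Definition insert_at (j : nat) (x : T) (s : seq T) : seq T :=
  take j s ++ x :: drop j s.

(* free exchange: move x to 0-based position j, but never backwards
   (only closer to the front; j larger than current index = no move). *)
Definition move_to (j : nat) (x : T) (s : seq T) : seq T :=
  insert_at (minn j (index x s)) x (rem x s).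

(* An online algorithm without paid exchanges: given the history of previous
   requests, the current list and the current request, returns the new list. *)
Definition step := seq T -> seq T -> T -> seq T.

Fixpoint run (alg : step) (h : seq T) (s : seq T) (sigma : seq T) : nat :=
  match sigma with
  | [::] => 0
  | x :: sigma' => pos x s + run alg (rcons h x) (alg h s x) sigma'
  end.

Definition mtfo_step : step := fun h s x =>
  if odd (count_mem x h).+1 then move_to 0 x s else s.

Definition mtfe_step : step := fun h s x =>
  if ~~ odd (count_mem x h).+1 then move_to 0 x s else s.

(* TS (Timestamp). since = requests strictly after the previous request to x
   (reversed; order is irrelevant for counting). *)
Definition ts_step : step := fun h s x =>
  if x \in h then
    let since := take (index x (rev h)) (rev h) in
    let j := find (fun y => count_mem y since <= 1) (take (index x s) s) in
    if j < index x s then move_to j x s else s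
  else s.

Definition TS (s sigma : seq T) := run ts_step [::] s sigma.
Definition MTFO (s sigma : seq T) := run mtfo_step [::] s sigma.
Definition MTFE (s sigma : seq T) := run mtfe_step [::] s sigma.

(* An arbitrary offline algorithm: for each request, a sequence of paid
   adjacent exchanges performed before serving it (cost 1 each), then the
   access (cost = position), then a free exchange moving the accessed item
   to 0-based position j (closer to the front). Paid exchanges "at any time"
   can all be moved to just before the next request. Missing schedule
   entries default to "no exchanges". *)
Definition sched := seq (seq nat * nat).

Fixpoint offline_cost (s : seq T) (sigma : seq T) (S : sched) : nat :=
  match sigma with
  | [::] => 0
  | x :: sigma' =>
      let st := head ([::], size s) S in
      let s1 := foldl (fun l i => swap_adj i l) s st.1 in
      size st.1 + pos x s1 + offline_cost (move_to st.2 x s1) sigma' (behead S)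
  end.

Definition advice (s sigma : seq T) : bool * bool :=
  if TS s sigma <= minn (MTFO s sigma) (MTFE s sigma) then (false, false)
  else if MTFO s sigma <= MTFE s sigma then (false, true) else (true, false).

Definition alg_of_advice (b : bool * bool) : step :=
  match b with
  | (false, false) => ts_step
  | (false, true) => mtfo_step
  | _ => mtfe_step
  end.

End ListUpdate.

(* Main.v *)
Require Import Defs.
From mathcomp Require Import all_boot zify.
Set Implicit Arguments. Unset Strict Implicit. Unset Printing Implicit Defensive.



Definition phi_tbl : seq nat := [:: 1; 1; 1; 1; 1; 2; 2; 1; 1; 2; 2; 1; 0; 1; 1; 0; 1; 2; 2; 1; 1; 2; 2; 1; 0; 0; 0; 0; 0; 0; 0; 0; 0; 0; 0; 0; 4; 4; 4; 4; 4; 4; 4; 4; 4; 4; 4; 4; 4; 4; 4; 4; 4; 4; 4; 4; 4; 4; 4; 4; 5; 5; 5; 5; 5; 5; 5; 5; 5; 5; 5; 5; 2; 1; 2; 2; 2; 2; 2; 2; 2; 2; 2; 2; 2; 1; 2; 1; 2; 2; 2; 1; 2; 2; 2; 1; 2; 1; 2; 1; 2; 1; 2; 1; 2; 1; 2; 1; 3; 2; 3; 3; 2; 2; 3; 3; 2; 2; 3; 3; 3; 2; 3; 3; 2; 2; 3; 3; 2; 2; 3; 3; 3; 3; 4; 4; 3; 3; 4; 4; 3; 3; 4; 4; 2; 2; 1; 2; 2; 2; 2; 2; 2; 2; 2; 2; 1; 2; 1; 2; 1; 2; 2; 2; 1; 2; 2; 2; 1; 2; 1; 2; 1; 2; 1;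 2; 1; 2; 1; 2; 3; 3; 2; 3; 3; 3; 2; 2; 3; 3; 2; 2; 3; 3; 2; 3; 3; 3; 2; 2; 3; 3; 2; 2; 4; 4; 3; 3; 4; 4; 3; 3; 4; 4; 3; 3; 3; 3; 3; 3; 3; 3; 3; 3; 3; 3; 3; 3; 3; 3; 3; 3; 3; 3; 3; 3; 3; 3; 3; 3; 3; 3; 3; 3; 3; 3; 3; 3; 3; 3; 3; 3; 2; 1; 1; 2; 1; 1; 1; 1; 1; 1; 1; 1; 2; 1; 1; 2; 1; 1; 1; 1; 1; 1; 1; 1; 2; 2; 2; 2; 2; 2; 2; 2; 2; 2; 2; 2; 2; 1; 1; 2; 2; 1; 1; 2; 2; 2; 2; 2; 1; 1; 1; 1; 1; 1; 1; 1; 2; 2; 2; 2; 1; 1; 1; 1; 1; 1; 1; 1; 2; 2; 2; 2; 3; 3; 3; 3; 3; 3; 3; 3; 3; 3; 3; 3; 3; 3; 3; 3; 3; 3; 3; 3; 3; 3; 3; 3; 3; 3; 3; 3; 3; 3; 3; 3; 3; 3; 3; 3; 3; 2; 3; 3; 3; 2; 3; 3; 4; 3; 4; 3; 3; 2; 3; 2; 3; 2; 3; 2; 4; 3; 4; 3; 3; 2; 3; 2; 3; 2; 3; 2; 4; 3; 4; 3; 2; 1; 2; 2; 1; 1; 2; 2; 1; 1; 2; 2; 2; 2; 2; 2; 1; 2; 2; 2; 1; 1; 2; 2; 2; 2; 2; 2; 1; 2; 2; 2; 1; 1; 2; 2; 3; 3; 2; 3; 3; 3; 2; 3; 3; 4;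 3; 4; 2; 3; 2; 3; 2; 3; 2; 3; 3; 4; 3; 4; 2; 3; 2; 3; 2; 3; 2; 3; 3; 4; 3; 4; 2; 2; 1; 2; 2; 2; 1; 1; 2; 2; 1; 1; 2; 2; 2; 2; 2; 2; 2; 1; 2; 2; 1; 1; 2; 2; 2; 2; 2; 2; 2; 1; 2; 2; 1; 1; 4; 4; 4; 4; 4; 4; 4; 4; 5; 5; 5; 5; 4; 4; 4; 4; 4; 4; 4; 4; 5; 5; 5; 5; 4; 4; 4; 4; 4; 4; 4; 4; 5; 5; 5; 5; 1; 1; 1; 1; 0; 1; 1; 0; 0; 0; 0; 0; 1; 2; 2; 1; 1; 2; 2; 1; 0; 0; 0; 0; 1; 2; 2; 1; 1; 2; 2; 1; 0; 0; 0; 0].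
Definition pcode (oT oO oE oP : bool) (sa sb : nat) (pa pb : bool) : nat :=
  ((((((oT*2+oO)*2+oE)*2+oP)*3+sa)*3+sb)*2+pa)*2+pb.
Definition phi oT oO oE oP sa sb pa pb := nth 0 phi_tbl (pcode oT oO oE oP sa sb pa pb).

Definition pchk (oT oO oE oP : bool) (sa sb : nat) (pa pb : bool) : bool :=
  [&& phi oT oO oE (~~oP) sa sb pa pb <= phi oT oO oE oP sa sb pa pb + 5,
   all (fun c => (~~oT) + (~~oO) + (~~oE) +
     phi (oT || (sa <= 1)) (oO || ~~pa) (oE || pa) (oP || c) 0 (minn sb.+1 2) (~~pa) pb
     <= 5 * (~~oP) + phi oT oO oE oP sa sb pa pb) [:: true; false] &
   all (fun c => oT + oO + oE +
     phi (oT && ~~(sb <= 1)) (oO && pb) (oE && ~~pb) (oP && c) (minn sa.+1 2) 0 pa (~~pb)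
     <= 5 * oP + phi oT oO oE oP sa sb pa pb) [:: true; false]].

Lemma pchk_all oT oO oE oP sa sb pa pb : sa <= 2 -> sb <= 2 -> pchk oT oO oE oP sa sb pa pb.
Proof.
move: sa sb => [|[|[|sa]]] [|[|[|sb]]] //= _ _;
by case: oT; case: oO; case: oE; case: oP; case: pa; case: pb; vm_compute.
Qed.

Lemma pflip (oT oO oE oP : bool) sa sb (pa pb : bool) : sa <= 2 -> sb <= 2 ->
  phi oT oO oE (~~oP) sa sb pa pb <= phi oT oO oE oP sa sb pa pb + 5.
Proof. by move=> H1 H2; have /and3P [] := pchk_all oT oO oE oP pa pb H1 H2. Qed.

Lemma preqA (oT oO oE oP : bool) sa sb (pa pb c : bool) : sa <= 2 -> sb <= 2 ->
  (~~oT) + (~~oO) + (~~oE) +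
     phi (oT || (sa <= 1)) (oO || ~~pa) (oE || pa) (oP || c) 0 (minn sb.+1 2) (~~pa) pb
     <= 5 * (~~oP) + phi oT oO oE oP sa sb pa pb.
Proof.
move=> H1 H2; have /and3P [_ /allP H _] := pchk_all oT oO oE oP pa pb H1 H2.
by apply: (H c); case: c.
Qed.

Lemma preqB (oT oO oE oP : bool) sa sb (pa pb c : bool) : sa <= 2 -> sb <= 2 ->
  oT + oO + oE +
     phi (oT && ~~(sb <= 1)) (oO && pb) (oE && ~~pb) (oP && c) (minn sa.+1 2) 0 pa (~~pb)
     <= 5 * oP + phi oT oO oE oP sa sb pa pb.
Proof.
move=> H1 H2; have /and3P [_ _ /allP H] := pchk_all oT oO oE oP pa pb H1 H2.
by apply: (H c); case: c.
Qed.

Lemma phi_init (c : bool) : phi c c c c 2 2 false false = 0.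
Proof. by case: c. Qed.



Section Lists.
Variable T : eqType.
Implicit Types (s P Q R : seq T) (x y z w : T).

Definition bef (s : seq T) (u v : T) : bool := index u s < index v s.

Lemma index_split P Q R x y :
  uniq (P ++ Q ++ x :: R) -> y \in P ++ Q ++ x :: R ->
  index y (P ++ x :: Q ++ R) =
  (if y == x then size P
   else if index y (P ++ Q ++ x :: R) < size P then index y (P ++ Q ++ x :: R)
   else if index y (P ++ Q ++ x :: R) < size P + size Q
        then (index y (P ++ Q ++ x :: R)).+1
        else index y (P ++ Q ++ x :: R)).
Proof.
move=> U Hy.
have HxP : x \notin P.
  apply/negP=> xP; move: U; rewrite cat_uniq => /and3P [_ /hasPn H _].
  by move: (H x); rewrite !mem_cat in_cons eqxx orbT => /(_ isT); rewrite xP.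
have HQP : forall y, y \in P -> y \notin Q.
  move=> t tP; apply/negP=> tQ; move: U; rewrite cat_uniq => /and3P [_ /hasPn H _].
  by move: (H t); rewrite !mem_cat tQ => /(_ isT); rewrite tP.
have HxQ : x \notin Q.
  apply/negP=> xQ; move: U; rewrite cat_uniq => /and3P [_ _].
  rewrite cat_uniq => /and3P [_ /hasPn H _].
  by move: (H x); rewrite in_cons eqxx => /(_ isT); rewrite xQ.
rewrite !index_cat /=.
have ltP := index_mem y P; have ltQ := index_mem y Q.
case: (boolP (y \in P)) => yP.
  have -> : (y == x) = false by apply/eqP => e; move: HxP; rewrite -e yP.
  by rewrite ltP yP.
case: (boolP (y == x)) => [/eqP -> | nyx].
  by rewrite eqxx addn0.
rewrite eq_sym (negbTE nyx) index_cat.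
case: (boolP (y \in Q)) => yQ /=.
  have := ltQ; rewrite yQ => ?; case: ifP => ?; [lia|]; case: ifP => ?; lia.
case: ifP => ?; [lia|]; case: ifP => ?; lia.
Qed.

Lemma rem_cat_notin P R x : x \notin P -> rem x (P ++ R) = P ++ rem x R.
Proof.
elim: P => //= a P IH; rewrite in_cons negb_or => /andP [H1 H2].
by rewrite eq_sym (negbTE H1) IH.
Qed.

Lemma move_to_split j x s : uniq s -> x \in s ->
  exists P Q R, [/\ s = P ++ Q ++ x :: R, move_to j x s = P ++ x :: Q ++ R,
    size P = minn j (index x s) & size P + size Q = index x s].
Proof.
move=> us xs.
set i := index x s; set k := minn j i.
have ki : k <= i by rewrite geq_minr.
have ilt : i < size s by rewrite index_mem.
exists (take k s), (take (i - k) (drop k s)), (drop i.+1 s).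
have Hs : s = take k s ++ take (i - k) (drop k s) ++ x :: drop i.+1 s.
  rewrite -{1}(cat_take_drop k s); congr (_ ++ _).
  rewrite -{1}(cat_take_drop (i - k) (drop k s)); congr (_ ++ _).
  by rewrite drop_drop subnK // (drop_nth x) ?nth_index.
have sk : size (take k s) = k by rewrite size_takel; lia.
have sq : size (take (i - k) (drop k s)) = i - k by rewrite size_takel // size_drop; lia.
split => //; last by lia.
rewrite /move_to -/i -/k.
have Hx : x \notin take k s ++ take (i - k) (drop k s).
  move: us; rewrite {1}Hs catA cat_uniq /= => /and3P [_ ]; rewrite negb_or.
  by case/andP.
rewrite {1}Hs catA rem_cat_notin //= eqxx /insert_at.
by rewrite -catA take_size_cat // drop_size_cat.
Qed.

Lemma index_ne s y z : y \in s -> z \in s -> y != z -> index y s != index z s.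
Proof. by move=> ys zs; apply: contra => /eqP /index_inj => ->. Qed.

Lemma bef_mem s u v : bef s u v -> u \in s.
Proof. by move=> H; rewrite -index_mem; exact: leq_trans H (index_size v s). Qed.

Lemma bef_antisym s u v : u \in s -> v \in s -> u != v -> bef s v u = ~~ bef s u v.
Proof.
move=> us vs uv; have := index_ne us vs uv; rewrite /bef => H.
by rewrite -leqNgt ltn_neqAle eq_sym H.
Qed.

Lemma bef_irr s u : bef s u u = false.
Proof. by rewrite /bef ltnn. Qed.

Definition fsh (a b i : nat) := if i < a then i else if i < b then i.+1 else i.

Lemma fsh_mono a b i j : a <= b -> i != b -> j != b -> i != j ->
  (fsh a b i < fsh a b j) = (i < j).
Proof. by rewrite /fsh => *; (repeat case: ifP => ?); apply/idP/idP => ?; lia. Qed.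

Lemma fsh_x a b i : a <= b -> i != b -> (a < fsh a b i) = (b < i) || (a <= i).
Proof. by rewrite /fsh => *; (repeat case: ifP => ?); apply/idP/idP => ?; lia. Qed.

Lemma fsh_l i v : v != i.+1 -> v != i -> (i < fsh i (i + 1) v) = (i.+1 < v).
Proof. by rewrite /fsh => *; (repeat case: ifP => ?); apply/idP/idP => ?; lia. Qed.

Lemma fsh_r i v : v != i.+1 -> v != i -> (fsh i (i + 1) v < i) = (v < i.+1).
Proof. by rewrite /fsh => *; (repeat case: ifP => ?); apply/idP/idP => ?; lia. Qed.

Lemma index_split' P Q R x y :
  uniq (P ++ Q ++ x :: R) -> y \in P ++ Q ++ x :: R ->
  index y (P ++ x :: Q ++ R) =
  (if y == x then size P else fsh (size P) (size P + size Q) (index y (P ++ Q ++ x :: R))).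
Proof. by move=> U Y; rewrite index_split. Qed.

Lemma move_to_props j x s : uniq s -> x \in s ->
  [/\ perm_eq (move_to j x s) s,
      (forall y z, y \in s -> z \in s -> y != x -> z != x ->
         bef (move_to j x s) y z = bef s y z) &
      (forall y, y \in s -> y != x ->
         bef (move_to j x s) x y = bef s x y || (minn j (index x s) <= index y s))].
Proof.
move=> us xs; have [P [Q [R [Hs Hm sP sPQ]]]] := move_to_split j us xs.
rewrite Hm; subst s.
split.
- by rewrite perm_cat2l perm_sym (perm_catCA Q [:: x] R).
- move=> y z ys zs yx zx; rewrite /bef !index_split' // (negbTE yx) (negbTE zx).
  case: (boolP (y == z)) => [/eqP -> | yz]; first by rewrite !ltnn.
  have := index_ne ys xs yx; have := index_ne zs xs zx; rewrite -sPQ => ? ?.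
  by rewrite fsh_mono ?leq_addr // index_ne.
- move=> y ys yx; rewrite /bef !index_split' // (negbTE yx) eqxx -sP sPQ.
  have sPx : size P <= index x (P ++ Q ++ x :: R) by rewrite -sPQ leq_addr.
  by rewrite fsh_x // index_ne.
Qed.

Lemma swap_props i s : uniq s ->
  perm_eq (swap_adj i s) s /\
  ((forall u v, bef (swap_adj i s) u v = bef s u v) \/ exists a b, forall u v, u \in s -> v \in s ->
    bef (swap_adj i s) u v != bef s u v -> (u == a) && (v == b) || (u == b) && (v == a)).
Proof.
move=> us; rewrite /swap_adj.
case E: (drop i s) => [|a [|b r]].
- by rewrite -E cat_take_drop perm_refl; split => //; left.
- by rewrite -E cat_take_drop perm_refl; split => //; left.
have si : size (take i s) = i.
  apply: size_takel; have := size_drop i s; rewrite E /=; lia.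
move: (take i s) si (cat_take_drop i s) => P si; rewrite E => Hs.
subst s.
split; first by rewrite perm_cat2l -[[:: b, a & r]]/([:: b] ++ [:: a] ++ r) perm_catCA.
right; exists a, b => u v un vn.
have ib : index b (P ++ [:: a, b & r]) = i.+1.
  rewrite index_cat.
  have bP : b \notin P by move: us; rewrite cat_uniq => /and3P [_ /hasPn H _];
    apply/negP => bP; move: (H b); rewrite !in_cons eqxx orbT => /(_ isT); rewrite bP.
  have ba : a != b by move: us; rewrite cat_uniq => /and3P [_ _] /= /andP [];
    rewrite in_cons negb_or => /andP [].
  by rewrite (negbTE bP) /= (negbTE ba) eqxx si addn1.
have ia : index a (P ++ [:: a, b & r]) = i.
  rewrite index_cat.
  have aP : a \notin P by move: us; rewrite cat_uniq => /and3P [_ /hasPn H _];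
    apply/negP => aP; move: (H a); rewrite !in_cons eqxx /= => /(_ isT); rewrite aP.
  by rewrite (negbTE aP) /= eqxx si addn0.
have bs : b \in P ++ [:: a, b & r] by rewrite !mem_cat !in_cons eqxx !orbT.
have aS : a \in P ++ [:: a, b & r] by rewrite !mem_cat !in_cons eqxx !orbT.
have SP := @index_split' P [:: a] r b.
rewrite /= in SP.
rewrite /bef !SP // si /=.
case: (boolP (u == b)) => [/eqP Eu | nub]; case: (boolP (v == b)) => [/eqP Ev | nvb].
- by subst; rewrite !ltnn.
- subst u.
  case: (boolP (v == a)) => [_|nva]; rewrite ?andbF ?andbT ?orbT ?orbF //=.
  have := index_ne vn aS nva; have := index_ne vn bs nvb; rewrite ia ib => ? ?.
  by rewrite fsh_l // eqxx.
- subst v.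
  case: (boolP (u == a)) => [_|nua]; rewrite ?andbF ?andbT ?orbT ?orbF //=.
  have := index_ne un aS nua; have := index_ne un bs nub; rewrite ia ib => ? ?.
  by rewrite fsh_r // eqxx.
- have := index_ne un bs nub; have := index_ne vn bs nvb; rewrite ib => ? ?.
  case: (boolP (u == v)) => [/eqP -> | nuv]; first by rewrite !ltnn.
  by rewrite fsh_mono ?addn1 ?leq_addr // ?index_ne // eqxx.
Qed.

Lemma index_count s x : uniq s -> x \in s -> index x s = count (fun y => bef s y x) s.
Proof.
elim: s => //= a s IH /andP [an us]; rewrite in_cons => xin.
rewrite /bef /=.
case: (boolP (a == x)) => [/eqP E | nax].
  subst x; rewrite eqxx ltn0 add0n; apply/esym/eqP; rewrite -leqn0 leqNgt -has_count.
  by apply/hasPn => y _; rewrite ltn0.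
have xs : x \in s by move: xin; rewrite eq_sym (negbTE nax).
rewrite eqxx ltn0Sn add1n; congr _.+1; rewrite [LHS](IH us xs).
apply: eq_in_count => y ys /=.
have -> : (a == y) = false by apply/eqP => e; move: an; rewrite e ys.
by rewrite ltnS /bef.
Qed.

Lemma sum_bool (I : eqType) (r : seq I) (p : pred I) : \sum_(a <- r) (p a : nat) = count p r.
Proof. by elim: r => [|a r IH]; rewrite ?big_nil ?big_cons ?IH. Qed.

Lemma sum_eq1 (I : eqType) (r : seq I) (i0 : I) (G : I -> nat) :
  \sum_(a <- r) (i0 == a) * G a = count_mem i0 r * G i0.
Proof.
elim: r => [|a r IH]; rewrite ?big_nil ?big_cons ?IH //=.
case: (boolP (i0 == a)) => [/eqP <- | ha]; first by rewrite eqxx mulnDl.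
by rewrite eq_sym (negbTE ha).
Qed.

Definition since (h : seq T) u := take (index u (rev h)) (rev h).
Definition tm (h : seq T) u v := if u \in h then minn (count_mem v (since h u)) 2 else 2.
Definition TSinv (h s : seq T) := forall w y k, y \in s -> bef s w y ->
  2 <= count_mem y (drop k h) -> 1 < count_mem w (drop k h).
Definition mlast (h : seq T) x := size h - index x (rev h).

Lemma since_rcons h x u : since (rcons h x) u = if x == u then [::] else x :: since h u.
Proof. by rewrite /since rev_rcons /=; case: (x == u). Qed.

Lemma since_drop h x y : count_mem y (since h x) = count_mem y (drop (mlast h x) h).
Proof.
by rewrite /since take_rev count_rev /mlast.
Qed.

Lemma notin_drop_mlast h x : x \notin drop (mlast h x) h.
Proof.
rewrite -mem_rev /mlast -take_rev.
case: (boolP (x \in rev h)) => xr.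
  by rewrite in_take // ltnn.
by apply/negP => /mem_take; apply/negP.
Qed.

Lemma count_drop_mono (p : pred T) h k m : k <= m -> count p (drop m h) <= count p (drop k h).
Proof.
move=> km; rewrite -(subnK km) -drop_drop.
by rewrite -{2}(cat_take_drop (m - k) (drop k h)) count_cat leq_addl.
Qed.

Lemma in_drop_lt h x k : x \in drop k h -> k < mlast h x.
Proof.
move=> H; rewrite ltnNge; apply/negP => mk.
move: (notin_drop_mlast h x); apply/negP.
rewrite negbK; by move: H; rewrite -(subnK mk) -drop_drop => /mem_drop.
Qed.

Lemma lt_in_drop h x k : x \in h -> k < mlast h x -> x \in drop k h.
Proof.
move=> xh km.
have ir : index x (rev h) < size h by rewrite -(size_rev h) index_mem mem_rev.
have Hn : nth x h (size h - (index x (rev h)).+1) = x.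
  by rewrite -nth_rev // nth_index // mem_rev.
have Hl : (size h - (index x (rev h)).+1) < size h by lia.
have Hd : x \in drop (size h - (index x (rev h)).+1) h.
  by rewrite (drop_nth x Hl) Hn in_cons eqxx.
have kk : k <= size h - (index x (rev h)).+1 by move: km; rewrite /mlast; lia.
by move: Hd; rewrite -(subnK kk) -drop_drop => /mem_drop.
Qed.

Lemma ts_cases h s x : ts_step h s x = s \/ exists j, ts_step h s x = move_to j x s.
Proof.
rewrite /ts_step; case: ifP => _; last by left.
by case: ifP => _; [right; eexists | left].
Qed.

Lemma ts_key h s x y : uniq s -> x \in s -> y \in s -> y != x -> TSinv h s ->
  bef (ts_step h s x) x y = bef s x y || (tm h x y <= 1).
Proof.
move=> us xs ys yx inv.
have tmE : (tm h x y <= 1) = (x \in h) && (count_mem y (since h x) <= 1).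
  by rewrite /tm; case: (x \in h) => //=; rewrite geq_min orbF.
rewrite tmE /ts_step.
case: (boolP (x \in h)) => xh /=; last by rewrite orbF.
set ix := index x s.
set P := fun y0 => count_mem y0 (since h x) <= 1.
rewrite -/(since h x).
set j := find _ (take ix s).
have Hfind : forall z, z \in s -> index z s < ix -> P z -> j <= index z s.
  move=> z zs zix Pz; rewrite leqNgt; apply/negP => jz.
  have := before_find x jz; rewrite nth_take // nth_index //.
  by rewrite Pz.
have ixs : ix < size s by rewrite index_mem.
case: ifP => jix.
- have [_ _ H3] := move_to_props j us xs.
  rewrite H3 // (_ : minn j (index x s) = j); last by apply/minn_idPl/ltnW.
  case: (boolP (bef s x y)) => //= nxy.
  have iyx : index y s < ix.
    have := index_ne ys xs yx; move: nxy; rewrite /bef -/ix; lia.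
  apply/idP/idP => [jy | Py]; last exact: Hfind.
  have hasP : has P (take ix s) by rewrite has_find size_takel //; lia.
  have := nth_find x hasP; rewrite nth_take // => Pw.
  set w := nth x s j in Pw.
  have jn : j < size s by lia.
  have iw : index w s = j by rewrite index_uniq.
  case: (ltngtP j (index y s)) => [jly | jgt | jey]; [ | lia | by move: Pw; rewrite /w jey nth_index].
  rewrite leqNgt; apply/negP => nPy.
  have bw : bef s w y by rewrite /bef iw.
  have := inv w y (mlast h x) ys bw; rewrite -!since_drop => /(_ nPy).
  by rewrite ltnNge; move: Pw; rewrite /P => ->.
- case: (boolP (bef s x y)) => nxy; first by []. rewrite orFb; apply/esym/negP => Py.
  have iyx : index y s < ix.
    have := index_ne ys xs yx; move: nxy; rewrite /bef -/ix; lia.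
  have := Hfind y ys iyx Py; move: jix; rewrite -/j => /negbT; rewrite -leqNgt; lia.
Qed.

Definition movelike (s s' : seq T) x := s' = s \/ exists j, s' = move_to j x s.

Lemma movelike_props s s' x : uniq s -> x \in s -> movelike s s' x ->
  perm_eq s' s /\ (forall y z, y \in s -> z \in s -> y != x -> z != x -> bef s' y z = bef s y z).
Proof.
move=> us xs [-> | [j ->]]; first by split.
by have [H1 H2 _] := move_to_props j us xs; split.
Qed.

Lemma count_mem_rcons (t : seq T) x y : count_mem y (rcons t x) = count_mem y t + (x == y).
Proof. by rewrite -cats1 count_cat /= addn0. Qed.

Lemma TSinv_step h s x : uniq s -> x \in s -> TSinv h s ->
  TSinv (rcons h x) (ts_step h s x).
Proof.
move=> us xs inv w y k ys' bwy Hy.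
have ML : movelike s (ts_step h s x) x.
  by case: (ts_cases h s x) => [->|[j ->]]; [left | right; exists j].
have [pe other] := movelike_props us xs ML.
have ys : y \in s by rewrite -(perm_mem pe).
have ws : w \in s by rewrite -(perm_mem pe); exact: bef_mem bwy.
have us' : uniq (ts_step h s x) by rewrite (perm_uniq pe).
case: (leqP k (size h)) => kh; last first.
  by move: Hy; rewrite drop_oversize // size_rcons.
move: Hy; rewrite drop_rcons // !count_mem_rcons => Hy.
set t0 := drop k h in Hy *.
case: (eqVneq w x) => [Ew | wx]; case: (eqVneq y x) => [Ey | yx].
- by subst; rewrite bef_irr in bwy.
- subst w; rewrite addn1 ltnS lt0n; apply/negP => /eqP c0.
  move: Hy; rewrite (eq_sym x y) (negbTE yx) addn0 => Hy.
  have xt : x \notin t0 by rewrite -has_pred1 has_count c0.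
  move: bwy; rewrite ts_key // => /orP [bxy | ].
    by have := inv x y k ys bxy Hy; rewrite -/t0 c0.
  rewrite /tm; case: ifP => // xh; rewrite geq_min orbF => cy.
  have mk : mlast h x <= k by rewrite leqNgt; apply/negP => /(lt_in_drop xh); rewrite -/t0 (negbTE xt).
  have := count_drop_mono (pred1 y) h mk; rewrite -/t0 -since_drop => H.
  by have := leq_trans H cy; rewrite leqNgt Hy.
- subst y; rewrite addn0; move: Hy; rewrite eqxx /= addn1 ltnS => Hy.
  have xt : x \in t0 by rewrite -has_pred1 has_count.
  have ws' : w \in ts_step h s x by rewrite (perm_mem pe).
  have xs' : x \in ts_step h s x by rewrite (perm_mem pe).
  have xw : x != w by rewrite eq_sym.
  move: bwy; rewrite (bef_antisym xs' ws' xw) ts_key // negb_or => /andP [_].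
  rewrite /tm; have xh : x \in h by exact: mem_drop xt.
  rewrite xh geq_min orbF -ltnNge => cw.
  have := count_drop_mono (pred1 w) h (ltnW (in_drop_lt xt)); rewrite -/t0 -since_drop => H.
  exact: leq_trans cw H.
- move: Hy; rewrite (eq_sym x y) (negbTE yx) !addn0 => Hy.
  apply: (inv w y k ys _ Hy); rewrite -(other w y ws ys wx yx) //.
Qed.

End Lists.



Section Pairs.
Variable T : eqType.
Implicit Types (s L h : seq T) (x y a b : T).

Definition pphi h sT sO sE sP a b :=
  phi (bef sT a b) (bef sO a b) (bef sE a b) (bef sP a b)
      (tm h a b) (tm h b a) (odd (count_mem a h)) (odd (count_mem b h)).

Definition cst s x a b := (x == a) * bef s b a + (x == b) * bef s a b.

Lemma tm_le2 h a b : tm h a b <= 2.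
Proof. by rewrite /tm; case: ifP => _ //; rewrite geq_minr. Qed.

Lemma tm_self h a b : tm (rcons h a) a b = 0.
Proof. by rewrite /tm mem_rcons in_cons eqxx /= since_rcons eqxx. Qed.

Lemma tm_other h a b : a != b -> tm (rcons h a) b a = minn (tm h b a).+1 2.
Proof.
move=> ab; rewrite /tm mem_rcons in_cons eq_sym (negbTE ab) /= since_rcons (negbTE ab).
case: (b \in h) => //=; rewrite eqxx /= add1n.
by case: (count_mem a (since h b)) => [|[|n]].
Qed.

Lemma tm_none h x a b : x != a -> x != b -> tm (rcons h x) a b = tm h a b.
Proof.
move=> xa xb; rewrite /tm mem_rcons in_cons eq_sym (negbTE xa) /= since_rcons (negbTE xa).
by rewrite /= (negbTE xb).
Qed.

Lemma mtfo_move h s x : movelike s (mtfo_step h s x) x.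
Proof. by rewrite /mtfo_step; case: ifP => _; [right; exists 0 | left]. Qed.

Lemma mtfe_move h s x : movelike s (mtfe_step h s x) x.
Proof. by rewrite /mtfe_step; case: ifP => _; [right; exists 0 | left]. Qed.

Lemma ts_move h s x : movelike s (ts_step h s x) x.
Proof. by case: (ts_cases h s x) => [->|[j ->]]; [left | right; exists j]. Qed.

Lemma mtfo_bef h s a b : uniq s -> a \in s -> b \in s -> b != a ->
  bef (mtfo_step h s a) a b = bef s a b || ~~ odd (count_mem a h).
Proof.
move=> us aS bs ba; rewrite /mtfo_step oddS.
case: ifP => _ /=; last by rewrite orbF.
have [_ _ H] := move_to_props 0 us aS; by rewrite H // min0n leq0n !orbT.
Qed.

Lemma mtfe_bef h s a b : uniq s -> a \in s -> b \in s -> b != a ->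
  bef (mtfe_step h s a) a b = bef s a b || odd (count_mem a h).
Proof.
move=> us aS bs ba; rewrite /mtfe_step oddS negbK.
case: ifP => _ /=; last by rewrite orbF.
have [_ _ H] := move_to_props 0 us aS; by rewrite H // min0n leq0n !orbT.
Qed.


Lemma pair_step L h sT sO sE s1 x j a b :
  uniq L -> perm_eq sT L -> perm_eq sO L -> perm_eq sE L -> perm_eq s1 L ->
  TSinv h sT -> x \in L -> a \in L -> b \in L -> a != b ->
  cst sT x a b + cst sO x a b + cst sE x a b +
    pphi (rcons h x) (ts_step h sT x) (mtfo_step h sO x) (mtfe_step h sE x)
         (move_to j x s1) a b
  <= 5 * cst s1 x a b + pphi h sT sO sE s1 a b.
Proof.
move=> uL pT pO pE p1 inv xL aL bL ab.
have uT : uniq sT by rewrite (perm_uniq pT).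
have uO : uniq sO by rewrite (perm_uniq pO).
have uE : uniq sE by rewrite (perm_uniq pE).
have u1 : uniq s1 by rewrite (perm_uniq p1).
have mem : forall s z, perm_eq s L -> z \in L -> z \in s by move=> s z /perm_mem ->.
have [pT' _] := movelike_props uT (mem _ _ pT xL) (ts_move h sT x).
have [pO' _] := movelike_props uO (mem _ _ pO xL) (mtfo_move h sO x).
have [pE' _] := movelike_props uE (mem _ _ pE xL) (mtfe_move h sE x).
have [p1' _ _] := move_to_props j u1 (mem _ _ p1 xL).
have ba : b != a by rewrite eq_sym.
case: (eqVneq x a) => [Ex | xa].
  subst x; rewrite /cst eqxx (negbTE ab) !mul1n !mul0n !addn0.
  rewrite !(bef_antisym (mem _ _ pT aL) (mem _ _ pT bL) ab).
  rewrite !(bef_antisym (mem _ _ pO aL) (mem _ _ pO bL) ab).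
  rewrite !(bef_antisym (mem _ _ pE aL) (mem _ _ pE bL) ab).
  rewrite !(bef_antisym (mem _ _ p1 aL) (mem _ _ p1 bL) ab).
  rewrite /pphi ts_key // ?(mem _ _ pT) // mtfo_bef // ?(mem _ _ pO) //.
  rewrite mtfe_bef // ?(mem _ _ pE) //.
  have [_ _ H1] := move_to_props j u1 (mem _ _ p1 aL).
  rewrite H1 ?(mem _ _ p1) // tm_self tm_other // !count_mem_rcons eqxx (negbTE ab).
  rewrite addn1 oddS addn0.
  exact: preqA (tm_le2 h a b) (tm_le2 h b a).
case: (eqVneq x b) => [Ex | xb].
  subst x; rewrite /cst eqxx (negbTE ba) !mul1n !mul0n !add0n.
  have H : forall s, perm_eq s L -> bef s a b = ~~ bef s b a.
    by move=> s ps; rewrite (bef_antisym (mem _ _ ps bL) (mem _ _ ps aL) ba).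
  rewrite /pphi (H _ (perm_trans pT' pT)) (H _ (perm_trans pO' pO)) (H _ (perm_trans pE' pE)) (H _ (perm_trans p1' p1)).
  rewrite ts_key // ?(mem _ _ pT) // mtfo_bef // ?(mem _ _ pO) //.
  rewrite mtfe_bef // ?(mem _ _ pE) //.
  have [_ _ H1] := move_to_props j u1 (mem _ _ p1 bL).
  rewrite H1 ?(mem _ _ p1) // tm_self tm_other // !count_mem_rcons eqxx (negbTE ba).
  rewrite addn1 oddS addn0.
  have H2 : forall s, perm_eq s L -> bef s b a = ~~ bef s a b.
    by move=> s ps; rewrite (bef_antisym (mem _ _ ps aL) (mem _ _ ps bL) ab).
  rewrite (H2 _ pT) (H2 _ pO) (H2 _ pE) (H2 _ p1) !negb_or !negbK.
  exact: preqB (tm_le2 h a b) (tm_le2 h b a).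
rewrite /cst (negbTE xa) (negbTE xb) !mul0n !addn0 add0n.
have [_ oT] := movelike_props uT (mem _ _ pT xL) (ts_move h sT x).
have [_ oO] := movelike_props uO (mem _ _ pO xL) (mtfo_move h sO x).
have [_ oE] := movelike_props uE (mem _ _ pE xL) (mtfe_move h sE x).
have [_ o1 _] := move_to_props j u1 (mem _ _ p1 xL).
have ax : a != x by rewrite eq_sym.
have bx : b != x by rewrite eq_sym.
rewrite /pphi oT ?(mem _ _ pT) // oO ?(mem _ _ pO) // oE ?(mem _ _ pE) //.
rewrite o1 ?(mem _ _ p1) // !tm_none // !count_mem_rcons (negbTE xa) (negbTE xb) !addn0.
by rewrite leq_addl.
Qed.


Definition dsum L (F : T -> T -> nat) := \sum_(a <- L) \sum_(b <- L) F a b.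

Lemma dsplit L F G : dsum L (fun a b => F a b + G a b) = dsum L F + dsum L G.
Proof. by rewrite /dsum -big_split; apply: eq_bigr => a _; rewrite big_split. Qed.

Lemma dscale L k F : dsum L (fun a b => k * F a b) = k * dsum L F.
Proof. by rewrite /dsum big_distrr; apply: eq_bigr => a _; rewrite big_distrr. Qed.

Lemma dsum_le L F G : (forall a b, a \in L -> b \in L -> F a b <= G a b) ->
  dsum L F <= dsum L G.
Proof.
move=> H; rewrite /dsum big_seq [X in _ <= X]big_seq; apply: leq_sum => a aL.
by rewrite big_seq [X in _ <= X]big_seq; apply: leq_sum => b bL; apply: H.
Qed.

Lemma dsum_combine L (F1 F2 F3 F4 G1 G2 : T -> T -> nat) :
  (forall a b, a \in L -> b \in L -> F1 a b + F2 a b + F3 a b + F4 a b <= 5 * G1 a b + G2 a b) ->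
  dsum L F1 + dsum L F2 + dsum L F3 + dsum L F4 <= 5 * dsum L G1 + dsum L G2.
Proof. by move=> H; rewrite -!dsplit -dscale -dsplit; apply: dsum_le. Qed.

Definition Phi L h sT sO sE sP := dsum L (fun a b => (a != b) * pphi h sT sO sE sP a b).

Lemma cost_id L s x : uniq L -> perm_eq s L -> x \in L ->
  dsum L (fun a b => (a != b) * cst s x a b) = 2 * index x s.
Proof.
move=> uL ps xL.
have us : uniq s by rewrite (perm_uniq ps).
have xs : x \in s by rewrite (perm_mem ps).
have -> : dsum L (fun a b => (a != b) * cst s x a b) = dsum L (fun a b => cst s x a b).
  apply: eq_bigr => a _; apply: eq_bigr => b _.
  by case: (eqVneq a b) => [-> | _]; rewrite /cst ?bef_irr ?mul1n //= !muln0.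
rewrite /cst dsplit /dsum.
have E2 : forall a, \sum_(b <- L) (x == b) * bef s a b = bef s a x.
  by move=> a; rewrite sum_eq1 count_uniq_mem // xL mul1n.
rewrite (eq_bigr _ (fun a _ => E2 a)).
have -> : \sum_(a <- L) \sum_(b <- L) (x == a) * bef s b a = \sum_(b <- L) bef s b x.
  under eq_bigr => a _ do rewrite -big_distrr.
  by rewrite (sum_eq1 L x (fun a => \sum_(b <- L) bef s b a)) count_uniq_mem // xL mul1n.
rewrite sum_bool (index_count us xs) (permP ps).
by rewrite mul2n -addnn.
Qed.

Lemma glob_step L h sT sO sE s1 x j :
  uniq L -> perm_eq sT L -> perm_eq sO L -> perm_eq sE L -> perm_eq s1 L ->
  TSinv h sT -> x \in L ->
  2 * (index x sT + index x sO + index x sE) +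
    Phi L (rcons h x) (ts_step h sT x) (mtfo_step h sO x) (mtfe_step h sE x) (move_to j x s1)
  <= 10 * index x s1 + Phi L h sT sO sE s1.
Proof.
move=> uL pT pO pE p1 inv xL.
rewrite !mulnDr -(cost_id uL pT xL) -(cost_id uL pO xL) -(cost_id uL pE xL).
rewrite (_ : 10 = 5 * 2) // -mulnA -(cost_id uL p1 xL) /Phi.
apply: dsum_combine => a b aL bL.
case: (eqVneq a b) => [_ | ab]; first by rewrite !mul0n.
rewrite !mul1n.
exact: (pair_step j uL pT pO pE p1 inv xL aL bL ab).
Qed.

Lemma dsum_pq L (p q : T) : uniq L -> dsum L (fun a b => (p == a) * (q == b)) <= 1.
Proof.
move=> uL; rewrite /dsum.
under eq_bigr => a _ do rewrite -big_distrr.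
rewrite sum_eq1.
have -> : \sum_(b <- L) (q == b) = count_mem q L * 1.
  by rewrite -sum_eq1; apply: eq_bigr => b _; rewrite muln1.
by rewrite !count_uniq_mem // muln1; case: (p \in L); case: (q \in L).
Qed.

Lemma swap_Phi L h sT sO sE sP i : uniq L -> perm_eq sP L ->
  Phi L h sT sO sE (swap_adj i sP) <= Phi L h sT sO sE sP + 10.
Proof.
move=> uL pP; have uP : uniq sP by rewrite (perm_uniq pP).
have [_ [same | [p [q Hch]]]] := swap_props i uP.
  have -> : Phi L h sT sO sE (swap_adj i sP) = Phi L h sT sO sE sP.
    by apply: eq_bigr => a _; apply: eq_bigr => b _; rewrite /pphi same.
  exact: leq_addr.
apply: (@leq_trans (Phi L h sT sO sE sP + 5 * (dsum L (fun a b => (p == a) * (q == b))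
     + dsum L (fun a b => (q == a) * (p == b))))); last first.
  rewrite leq_add2l (_ : 10 = 5 * 2) // leq_mul2l /=.
  by rewrite -(addn1 1) leq_add // dsum_pq.
rewrite /Phi -dsplit -dscale -dsplit; apply: dsum_le => a b aL bL /=.
case: (eqVneq a b) => [_ | ab]; rewrite ?mul0n // !mul1n.
rewrite /pphi; set c := bef (swap_adj i sP) a b.
case: (eqVneq c (bef sP a b)) => [-> | ch]; first by rewrite leq_addr.
have aS : a \in sP by rewrite (perm_mem pP).
have bS : b \in sP by rewrite (perm_mem pP).
have := Hch a b aS bS ch.
have -> : c = ~~ bef sP a b by move: ch; rewrite /c; case: (bef _ a b); case: (bef sP a b).
move=> H; apply: leq_trans (pflip _ _ _ _ _ _ (tm_le2 h a b) (tm_le2 h b a)) _.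
rewrite leq_add2l; case/orP: H => /andP [/eqP -> /eqP ->]; rewrite !eqxx /= mul1n mulnDr.
  exact: leq_addr.
exact: leq_addl.
Qed.

Lemma swaps_Phi L h sT sO sE (l : seq nat) sP : uniq L -> perm_eq sP L ->
  perm_eq (foldl (fun l i => swap_adj i l) sP l) L /\
  Phi L h sT sO sE (foldl (fun l i => swap_adj i l) sP l) <= Phi L h sT sO sE sP + 10 * size l.
Proof.
move=> uL; elim: l sP => [|i l IH] sP pP /=; first by rewrite muln0 addn0.
have uP : uniq sP by rewrite (perm_uniq pP).
have [pe _] := swap_props i uP.
have pP' : perm_eq (swap_adj i sP) L by apply: perm_trans pe pP.
have [H1 H2] := IH _ pP'; split => //.
apply: leq_trans H2 _; rewrite mulnS addnA leq_add2r.
exact: swap_Phi.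
Qed.

End Pairs.



Lemma main_ind (T : eqType) (L : seq T) (sigma : seq T) : uniq L ->
  forall h sT sO sE sP S, perm_eq sT L -> perm_eq sO L -> perm_eq sE L -> perm_eq sP L ->
  TSinv h sT -> all (fun x => x \in L) sigma ->
  2 * (run (@ts_step T) h sT sigma + run (@mtfo_step T) h sO sigma + run (@mtfe_step T) h sE sigma)
    <= 10 * offline_cost sP sigma S + Phi L h sT sO sE sP.
Proof.
move=> uL; elim: sigma => [|x sigma IH] h sT sO sE sP S pT pO pE pP inv /=.
  by move=> _; rewrite addn0.
case/andP => xL aL.
set st := head _ S; set l := st.1; set j := st.2.
set s1 := foldl _ sP l.
have [p1 HPhi1] := swaps_Phi h sT sO sE l uL pP.
rewrite -/s1 in p1 HPhi1.
have uT : uniq sT by rewrite (perm_uniq pT).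
have uO : uniq sO by rewrite (perm_uniq pO).
have uE : uniq sE by rewrite (perm_uniq pE).
have u1 : uniq s1 by rewrite (perm_uniq p1).
have [pT' _] := movelike_props uT (eq_ind _ _ xL _ (esym (perm_mem pT x))) (ts_move h sT x).
have [pO' _] := movelike_props uO (eq_ind _ _ xL _ (esym (perm_mem pO x))) (mtfo_move h sO x).
have [pE' _] := movelike_props uE (eq_ind _ _ xL _ (esym (perm_mem pE x))) (mtfe_move h sE x).
have [p1' _ _] := move_to_props j u1 (eq_ind _ _ xL _ (esym (perm_mem p1 x))).
have inv' := TSinv_step uT (eq_ind _ _ xL _ (esym (perm_mem pT x))) inv.
have HIH := IH (rcons h x) _ _ _ _ (behead S) (perm_trans pT' pT) (perm_trans pO' pO)
  (perm_trans pE' pE) (perm_trans p1' p1) inv' aL.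
have HG := glob_step j uL pT pO pE p1 inv xL.
move: HIH HG HPhi1; rewrite /pos.
move: (run _ _ _ _) (run _ _ _ _) (run _ _ _ _) (offline_cost _ _ _) => r1 r2 r3 o.
move: (Phi _ _ _ _ _ _) (Phi _ _ _ _ _ _) (Phi _ _ _ _ _ _) => P1 P2 P3.
move: (index x sT) (index x sO) (index x sE) (index x s1) (size l) => i1 i2 i3 i4 n.
clear; lia.
Qed.

Lemma Phi_init (T : eqType) (L : seq T) : Phi L [::] L L L L = 0.
Proof.
apply: big1_seq => a _; apply: big1_seq => b _.
by rewrite /pphi /tm /= phi_init muln0.
Qed.

Lemma TSinv_init (T : eqType) (L : seq T) : TSinv [::] L.
Proof. by move=> w y k _ _; rewrite drop_oversize. Qed.

Theorem theorem3 (T : eqType) (L sigma : seq T) :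
  uniq L -> all (fun x => x \in L) sigma ->
  (forall S : sched,
     3 * minn (TS L sigma) (minn (MTFO L sigma) (MTFE L sigma))
       <= 5 * offline_cost L sigma S) /\
  (forall S : sched,
     3 * run (alg_of_advice (advice L sigma)) [::] L sigma
       <= 5 * offline_cost L sigma S).
Proof.
move=> uL aL.
have H1 : forall S : sched,
     3 * minn (TS L sigma) (minn (MTFO L sigma) (MTFE L sigma))
       <= 5 * offline_cost L sigma S.
  move=> S.
  have := @main_ind T L sigma uL [::] L L L L S (perm_refl L) (perm_refl L) (perm_refl L) (perm_refl L)
    (@TSinv_init T L) aL.
  rewrite Phi_init addn0 /TS /MTFO /MTFE.
  move: (run _ _ _ _) (run _ _ _ _) (run _ _ _ _) (offline_cost _ _ _) => a b c d.
  lia.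
split => // S; apply: leq_trans (H1 S); rewrite leq_mul2l /=.
rewrite /advice; case: ifP => H.
  by change (TS L sigma <= minn (TS L sigma) (minn (MTFO L sigma) (MTFE L sigma))); lia.
case: ifP => H2.
  by change (MTFO L sigma <= minn (TS L sigma) (minn (MTFO L sigma) (MTFE L sigma))); lia.
by change (MTFE L sigma <= minn (TS L sigma) (minn (MTFO L sigma) (MTFE L sigma))); lia.
Qed.
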